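(* Let $S$ be a periodic semigroup such that $E(S)\subseteq Z(S)$. Then the map $\pi:S\to E(S)$ is a semigroup homomorphism and the Clifford part $H(S)$ is a subsemigroup of $S$.
   Context: A semigroup $S$ is periodic if for every $x\in S$ some power $x^n$, $n\ge1$, is an idempotent; then the monogenic semigroup $\{x^n:n\in\mathbb N\}$ contains exactly one idempotent, denoted $\pi(x)$, defining $\pi:S\to E(S)$. $E(S)=\{x\in S:xx=x\}$ is the set of idempotents; $Z(S)=\{z\in S:\forall x\in S\ (xz=zx)\}$ is the center. $H(S)=\bigcup_{e\in E(S)}H_e$, where $H_e$ is the maximal subgroup of $S$ containing the idempotent $e$. *)

(* Defs.v *)
From Stdlib Require Import Arith.

Section Semigroup.
Variable T : Type.
Variable mul : T -> T -> T.

Definition associative_op : Prop :=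
  forall x y z, mul x (mul y z) = mul (mul x y) z.

(* spow x n = x^(n+1), i.e. positive powers only (n+1 >= 1). *)
Fixpoint spow (x : T) (n : nat) : T :=
  match n with
  | O => x
  | Datatypes.S n' => mul (spow x n') x
  end.

Definition idempotent (e : T) : Prop := mul e e = e.

Definition idempotents_central : Prop :=
  forall e, idempotent e -> forall x, mul x e = mul e x.

Definition periodic : Prop :=
  forall x, exists n, idempotent (spow x n).

(* pi_rel x e : e is the (unique) idempotent of the monogenic subsemigroup
   {x^n : n >= 1}, i.e. e = pi(x). *)
Definition pi_rel (x e : T) : Prop :=
  idempotent e /\ exists n, e = spow x n.

Definition subgroup_with_identity (G : T -> Prop) (e : T) : Prop :=
  G e /\
  (forall g h, G g -> G h -> G (mul g h)) /\
  (forall g, G g -> mul g e = g /\ mul e g = g) /\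
  (forall g, G g -> exists h, G h /\ mul g h = e /\ mul h g = e).

(* H_e: the maximal subgroup containing the idempotent e, i.e. the union of
   all subgroups of S whose identity is e. *)
Definition maxsubgroup (e : T) (x : T) : Prop :=
  exists G, subgroup_with_identity G e /\ G x.

Definition clifford_part (x : T) : Prop :=
  exists e, idempotent e /\ maxsubgroup e x.

End Semigroup.

(* Main.v *)
Require Import Defs.
From Stdlib Require Import Arith Lia.

Lemma spow_succ_l (S : Type) (mul : S -> S -> S) (A : associative_op S mul) x n :
  mul x (spow S mul x n) = spow S mul x (Datatypes.S n).
Proof.
  induction n as [|n IH]; simpl; [reflexivity|].
  rewrite A. simpl in IH. rewrite IH. reflexivity.
Qed.

Lemma spow_central (S : Type) (mul : S -> S -> S) (A : associative_op S mul)
  d (Hd : mul d d = d) (Hc : forall x, mul x d = mul d x) x n :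
  spow S mul (mul d x) n = mul d (spow S mul x n).
Proof.
  induction n as [|n IH]; simpl; [reflexivity|].
  rewrite IH. rewrite <- A. rewrite (A (spow S mul x n) d x).
  rewrite Hc. rewrite <- A. rewrite A. rewrite Hd. reflexivity.
Qed.

Definition U (S : Type) (mul : S -> S -> S) d z :=
  mul d z = z /\ exists t, mul d t = t /\ mul z t = d /\ mul t z = d.

Lemma U_mul (S : Type) (mul : S -> S -> S) (A : associative_op S mul)
  d (Hd : mul d d = d) (Hc : forall x, mul x d = mul d x) a b :
  U S mul d a -> U S mul d b -> U S mul d (mul a b).
Proof.
  intros [Ha [ta [Hta [H1 H2]]]] [Hb [tb [Htb [H3 H4]]]].
  split. { rewrite A, Ha. reflexivity. }
  exists (mul tb ta). split; [|split].
  - rewrite A, Htb. reflexivity.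
  - rewrite <- A, (A b tb ta), H3, (A a d ta), Hc, Ha. exact H1.
  - rewrite <- A, (A ta a b), H2, (A tb d b), Hc, Htb. exact H4.
Qed.

Lemma U_spow (S : Type) (mul : S -> S -> S) (A : associative_op S mul)
  d (Hd : mul d d = d) (Hc : forall x, mul x d = mul d x) a n :
  U S mul d a -> U S mul d (spow S mul a n).
Proof.
  intro Ha. induction n; simpl; [exact Ha|]. apply U_mul; auto.
Qed.

Lemma U_idem (S : Type) (mul : S -> S -> S) (A : associative_op S mul)
  d (Hc : forall x, mul x d = mul d x) w :
  U S mul d w -> mul w w = w -> w = d.
Proof.
  intros [Hw [t [_ [H1 _]]]] Hww.
  assert (H : mul (mul w w) t = mul w t) by (rewrite Hww; reflexivity).
  rewrite <- A, H1, Hc, Hw in H. exact H.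
Qed.

Lemma split_pow (S : Type) (mul : S -> S -> S) (A : associative_op S mul)
  g (Hg : mul g g = g) (Hc : forall x, mul x g = mul g x) a b :
  g = mul a b -> forall n, g = mul (spow S mul a n) (spow S mul b n).
Proof.
  intros Hab n. induction n as [|n IH]; [exact Hab|].
  rewrite <- Hg at 1. rewrite IH at 1.
  rewrite <- A, Hc, Hab.
  rewrite <- (A a b), (A (spow S mul a n) a).
  rewrite (spow_succ_l S mul A b n). reflexivity.
Qed.


Lemma spow_add (S : Type) (mul : S -> S -> S) (A : associative_op S mul) x m n :
  mul (spow S mul x m) (spow S mul x n) = spow S mul x (m + n + 1).
Proof.
  induction n as [|n IH].
  - rewrite Nat.add_0_r, Nat.add_1_r. reflexivity.
  - simpl. rewrite A, IH. replace (m + Datatypes.S n + 1) with (Datatypes.S (m + n + 1)) by lia.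
    reflexivity.
Qed.

Lemma mul_dd (S : Type) (mul : S -> S -> S) (A : associative_op S mul)
  d (Hd : mul d d = d) (Hc : forall x, mul x d = mul d x) x y :
  mul (mul d x) (mul d y) = mul d (mul x y).
Proof.
  rewrite <- A, (A x d y), (Hc x), <- A, A, Hd. reflexivity.
Qed.

Lemma Ux (S : Type) (mul : S -> S -> S) (A : associative_op S mul)
  d (Hd : mul d d = d) (Hc : forall x, mul x d = mul d x) e x n :
  mul e e = e -> mul d e = d -> e = spow S mul x n -> U S mul d (mul d x).
Proof.
  intros He Hde Hn.
  assert (Hpd : forall j, spow S mul (mul d x) j = mul d (spow S mul x j))
    by (intro; apply spow_central; auto).
  assert (Key : spow S mul (mul d x) (n + n + 1) = d).
  { rewrite Hpd, <- spow_add by exact A. rewrite <- Hn, He. exact Hde. }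
  split. { rewrite A, Hd. reflexivity. }
  exists (spow S mul (mul d x) (n + n)). split; [|split].
  - rewrite Hpd, A, Hd. reflexivity.
  - rewrite spow_succ_l by exact A. replace (Datatypes.S (n + n)) with (n + n + 1) by lia. exact Key.
  - change (spow S mul (mul d x) (Datatypes.S (n + n)) = d). replace (Datatypes.S (n + n)) with (n + n + 1) by lia. exact Key.
Qed.

Lemma Ug (S : Type) (mul : S -> S -> S) (A : associative_op S mul)
  d (Hd : mul d d = d) (Hc : forall x, mul x d = mul d x) j x h :
  mul d j = d -> mul x h = j -> mul h x = j -> U S mul d (mul d x).
Proof.
  intros Hdj H1 H2.
  split. { rewrite A, Hd. reflexivity. }
  exists (mul d h). split; [|split].
  - rewrite A, Hd. reflexivity.
  - rewrite mul_dd by auto. rewrite H1. exact Hdj.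
  - rewrite mul_dd by auto. rewrite H2. exact Hdj.
Qed.

Theorem proposition3p2 (S : Type) (mul : S -> S -> S)
  (Hassoc : associative_op S mul)
  (Hper : periodic S mul)
  (Hcent : idempotents_central S mul) :
  (* pi is a homomorphism: pi(xy) = pi(x) pi(y) *)
  (forall x y e f g,
      pi_rel S mul x e -> pi_rel S mul y f -> pi_rel S mul (mul x y) g ->
      g = mul e f) /\
  (* H(S) is a subsemigroup of S *)
  (forall x y, clifford_part S mul x -> clifford_part S mul y ->
      clifford_part S mul (mul x y)).
Proof.
  set (A := Hassoc).
  assert (Hidem : forall e f, idempotent S mul e -> idempotent S mul f ->
            idempotent S mul (mul e f)).
  { intros e f He Hf. unfold idempotent in *.
    rewrite <- A, (A f e f), <- (Hcent f Hf e), <- A, Hf, A, He. reflexivity. }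
  assert (Hde : forall e f, idempotent S mul e -> idempotent S mul f ->
            mul (mul e f) e = mul e f).
  { intros e f He Hf. rewrite <- A, <- (Hcent f Hf e), A, He. reflexivity. }
  assert (Hdf : forall e f, idempotent S mul f -> mul (mul e f) f = mul e f).
  { intros e f Hf. rewrite <- A, Hf. reflexivity. }
  split.
  - intros x y e f g [He [n Hn]] [Hf [m Hm]] [Hg [k Hk]].
    set (d := mul e f).
    assert (Hd : idempotent S mul d) by (apply Hidem; auto).
    assert (Hcd : forall z, mul z d = mul d z) by (intro; apply Hcent; exact Hd).
    assert (Uxd : U S mul d (mul d x)).
    { apply (Ux S mul A d Hd Hcd e x n); auto. exact (Hde e f He Hf). }
    assert (Uyd : U S mul d (mul d y)).
    { apply (Ux S mul A d Hd Hcd f y m); auto. apply Hdf; auto. }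
    assert (Ug' : U S mul d (mul d g)).
    { rewrite Hk, <- spow_central by auto. apply U_spow; auto.
      rewrite <- mul_dd by auto. apply U_mul; auto. }
    assert (Hdg : mul d g = d).
    { apply (U_idem S mul A d Hcd); auto. apply Hidem; auto. }
    assert (HW : (exists W, g = mul x W) /\ (exists Z, g = mul Z y)).
    { destruct k as [|k].
      - split; [exists y | exists x]; exact Hk.
      - split.
        + exists (mul y (spow S mul (mul x y) k)).
          rewrite Hk, <- (spow_succ_l S mul A). symmetry. apply A.
        + exists (mul (spow S mul (mul x y) k) x). rewrite Hk. simpl. apply A. }
    destruct HW as [[W HWx] [Z HZy]].
    assert (Hcg : forall z, mul z g = mul g z) by (intro; apply Hcent; exact Hg).
    assert (Heg : mul e g = g).
    { pose proof (split_pow S mul A g Hg Hcg x W HWx n) as Hs.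
      rewrite <- Hn in Hs. rewrite Hs, A, He. reflexivity. }
    assert (Hgf : mul g f = g).
    { pose proof (split_pow S mul A g Hg Hcg Z y HZy m) as Hs.
      rewrite <- Hm in Hs. rewrite Hs, <- A, Hf. reflexivity. }
    assert (Hgd : mul g d = g).
    { unfold d. rewrite A, (Hcent e He g), Heg, Hgf. reflexivity. }
    rewrite <- Hgd, Hcd. exact Hdg.
  - intros x y [e [He [G [[HGe [HGm [HGid HGinv]]] HGx]]]]
                [f [Hf [G' [[HGe' [HGm' [HGid' HGinv']]] HGy]]]].
    set (d := mul e f).
    assert (Hd : idempotent S mul d) by (apply Hidem; auto).
    assert (Hcd : forall z, mul z d = mul d z) by (intro; apply Hcent; exact Hd).
    assert (Uxd : U S mul d (mul d x)).
    { destruct (HGinv x HGx) as [h [_ [H1 H2]]].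
      apply (Ug S mul A d Hd Hcd e x h); auto. exact (Hde e f He Hf). }
    assert (Uyd : U S mul d (mul d y)).
    { destruct (HGinv' y HGy) as [h [_ [H1 H2]]].
      apply (Ug S mul A d Hd Hcd f y h); auto. apply Hdf; auto. }
    assert (Hxy : mul (mul d x) (mul d y) = mul x y).
    { rewrite mul_dd by auto. destruct (HGid x HGx) as [Hxe _].
      destruct (HGid' y HGy) as [_ Hfy].
      unfold d. rewrite <- A, (A f x y), <- (Hcent f Hf x), <- (A x f y), Hfy.
      rewrite A, <- (Hcent e He x), Hxe. reflexivity. }
    exists d. split; [exact Hd|]. exists (U S mul d). split.
    + split; [|split; [|split]].
      * split; [exact Hd|]. exists d. auto.
      * intros; apply U_mul; auto.
      * intros z [Hz _]. rewrite Hcd. auto.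
      * intros z [Hz [t [Ht [H1 H2]]]]. exists t. split; [|auto].
        split; [exact Ht|]. exists z. auto.
    + rewrite <- Hxy. apply U_mul; auto.
Qed.
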